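(* Fix $0\le\zeta_1<\zeta_2\le1$. For $\zeta_1<\zeta<\zeta_2$ define $$q(\zeta)=\frac{D(\zeta_2\|\zeta)\,(\zeta-\zeta_1)^2}{D(\zeta_1\|\zeta)\,(\zeta_2-\zeta)^2}.$$ Then $q$ is non-decreasing on $(\zeta_1,\zeta_2)$.
   Context: $D(p\|q)=p\log\frac pq+(1-p)\log\frac{1-p}{1-q}$ is the binary Kullback–Leibler divergence (natural log, with $0\log0=0$), defined for $p\in[0,1]$, $q\in(0,1)$. *)

(* Defs.v *)
From Stdlib Require Import Reals.
Open Scope R_scope.

Definition xlogxy (x y : R) : R :=
  if Req_EM_T x 0 then 0 else x * ln (x / y).

(* Binary Kullback-Leibler divergence D(p||q), natural log,
   intended for p in [0,1], q in (0,1). *)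
Definition binKL (p q : R) : R :=
  xlogxy p q + xlogxy (1 - p) (1 - q).

Definition qratio (z1 z2 z : R) : R :=
  (binKL z2 z * (z - z1) ^ 2) / (binKL z1 z * (z2 - z) ^ 2).

(* Main.v *)
Require Import Defs.
From Stdlib Require Import Reals Lra Psatz.
From Coquelicot Require Import Coquelicot.
Open Scope R_scope.

Lemma mono_incr (f df : R -> R) (x y : R) : x <= y ->
  (forall t, x <= t <= y -> is_derive f t (df t)) ->
  (forall t, x <= t <= y -> 0 <= df t) -> f x <= f y.
Proof.
  intros Hxy Hd Hp. destruct (Rle_lt_or_eq_dec _ _ Hxy) as [Hlt|Heq]; [|subst; lra].
  destruct (MVT_cor2 f df x y Hlt) as [c [Hc1 Hc2]].
  - intros c Hc. apply is_derive_Reals. now apply Hd.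
  - assert (0 <= df c) by (apply Hp; lra). nra.
Qed.

Lemma mono_decr (f df : R -> R) (x y : R) : x <= y ->
  (forall t, x <= t <= y -> is_derive f t (df t)) ->
  (forall t, x <= t <= y -> df t <= 0) -> f y <= f x.
Proof.
  intros Hxy Hd Hp.
  assert (H := mono_incr (fun t => - f t) (fun t => - df t) x y Hxy).
  cut (- f x <= - f y). lra. apply H.
  - intros t Ht. simpl. apply (is_derive_opp f). now apply Hd.
  - intros t Ht. specialize (Hp t Ht). lra.
Qed.

Definition KLc (p : R) := xlogxy p 1 + xlogxy (1 - p) 1.
Definition Dform (p z : R) := KLc p - p * ln z - (1 - p) * ln (1 - z).

Lemma xlog_form (p z : R) : 0 <= p -> 0 < z -> xlogxy p z = xlogxy p 1 - p * ln z.
Proof.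
  intros Hp Hz. unfold xlogxy. destruct (Req_EM_T p 0) as [->|Hn]; [ring|].
  rewrite !ln_div; try lra. rewrite ln_1. ring.
Qed.

Lemma Dform_eq (p z : R) : 0 <= p <= 1 -> 0 < z < 1 -> binKL p z = Dform p z.
Proof.
  intros Hp Hz. unfold binKL, Dform, KLc.
  rewrite (xlog_form p z) by lra. rewrite (xlog_form (1-p) (1-z)) by lra. ring.
Qed.

Lemma Dform_deriv p z : 0 < z < 1 -> is_derive (Dform p) z ((z - p) / (z * (1 - z))).
Proof. intros Hz. unfold Dform. auto_derive. lra. field. lra. Qed.

Definition L (p z : R) := 2 * (2 * z - z ^ 2 + p - 2 * p * z).

Lemma L_pos p z : 0 <= p <= 1 -> 0 < z < 1 -> 0 < L p z.
Proof.
  intros Hp Hz. unfold L.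
  assert (E : 2 * z - z ^ 2 + p - 2 * p * z = (1 - p) * (z * (2 - z)) + p * ((1 - z) * (1 + z))) by ring.
  rewrite E. assert (0 < z * (2 - z)) by nra. assert (0 < (1 - z) * (1 + z)) by nra. nra.
Qed.

Lemma Cst0 : KLc 0 = 0.
Proof. unfold KLc, xlogxy. destruct (Req_EM_T 0 0); [|lra].
  destruct (Req_EM_T (1-0) 0); [lra|]. replace ((1-0)/1) with 1 by field. rewrite ln_1. ring. Qed.

Lemma Cst1 : KLc 1 = 0.
Proof. unfold KLc, xlogxy. destruct (Req_EM_T (1-1) 0); [|lra].
  destruct (Req_EM_T 1 0); [lra|]. replace (1/1) with 1 by field. rewrite ln_1. ring. Qed.

Lemma Dform_diag p : 0 < p < 1 -> Dform p p = 0.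
Proof.
  intros Hp. unfold Dform, KLc, xlogxy.
  destruct (Req_EM_T p 0); [lra|]. destruct (Req_EM_T (1-p) 0); [lra|].
  replace (p/1) with p by field. replace ((1-p)/1) with (1-p) by field. ring.
Qed.

Lemma key_int p z : 0 < p < 1 -> 0 < z < 1 -> 3 * (p - z) ^ 2 <= Dform p z * L p z.
Proof.
  intros Hp Hz.
  set (g := fun t => Dform p t - 3 * (p - t) ^ 2 / L p t).
  set (dg := fun t => (t - p) * (4 * (p - t) ^ 2 * (1 - t + t ^ 2)) / (t * (1 - t) * (L p t) ^ 2)).
  assert (Hd : forall t, 0 < t < 1 -> is_derive g t (dg t)).
  { intros t Ht. assert (HL := L_pos p t ltac:(lra) Ht).
    assert (H1 := Dform_deriv p t Ht).
    assert (H2 : is_derive (fun t => 3 * (p - t) ^ 2 / L p t) t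
       (3 * (2 * (t - p) * L p t - (t - p) ^ 2 * (2 * (2 - 2 * t - 2 * p))) / (L p t) ^ 2)).
    { unfold L in *. auto_derive. lra. field. lra. }
    pose proof (is_derive_minus _ _ _ _ _ H1 H2) as H3.
    unfold g, dg. replace ((t - p) * (4 * (p - t) ^ 2 * (1 - t + t ^ 2)) / (t * (1 - t) * L p t ^ 2))
      with ((t - p) / (t * (1 - t)) - 3 * (2 * (t - p) * L p t - (t - p) ^ 2 * (2 * (2 - 2 * t - 2 * p))) / (L p t) ^ 2).
    exact H3. unfold L in *. field. lra. }
  assert (Hs : forall t, 0 < t < 1 -> 0 <= (1 - t + t ^ 2) / (t * (1 - t) * (L p t) ^ 2)).
  { intros t Ht. assert (HL := L_pos p t ltac:(lra) Ht). apply Rdiv_le_0_compat. nra.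
    apply Rmult_lt_0_compat. nra. nra. }
  assert (Hg : 0 <= g z).
  { assert (g p = 0). { unfold g. rewrite Dform_diag by lra. unfold Rdiv. ring. }
    destruct (Rle_dec p z).
    - rewrite <- H. apply (mono_incr g dg). lra. intros t Ht. apply Hd. lra.
      intros t Ht. unfold dg. specialize (Hs t ltac:(lra)).
      replace ((t - p) * (4 * (p - t) ^ 2 * (1 - t + t ^ 2)) / (t * (1 - t) * L p t ^ 2))
        with ((t - p) * (4 * (p - t) ^ 2) * ((1 - t + t ^ 2) / (t * (1 - t) * L p t ^ 2))) by (unfold Rdiv; ring).
      apply Rmult_le_pos; [|lra]. assert (0 <= (p-t)^2) by apply pow2_ge_0. apply Rmult_le_pos; lra.
    - rewrite <- H. apply (mono_decr g dg). lra. intros t Ht. apply Hd. lra.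
      intros t Ht. unfold dg. specialize (Hs t ltac:(lra)).
      replace ((t - p) * (4 * (p - t) ^ 2 * (1 - t + t ^ 2)) / (t * (1 - t) * L p t ^ 2))
        with ((t - p) * (4 * (p - t) ^ 2) * ((1 - t + t ^ 2) / (t * (1 - t) * L p t ^ 2))) by (unfold Rdiv; ring).
      apply Rmult_le_0_r; [|lra]. assert (0 <= (p-t)^2) by apply pow2_ge_0. assert (0 <= 4*(p-t)^2) by lra. nra. }
  assert (HL := L_pos p z ltac:(lra) Hz).
  unfold g in Hg.
  assert (3 * (p - z) ^ 2 / L p z * L p z = 3 * (p - z) ^ 2) by (field; lra).
  nra.
Qed.

Lemma key0 z : 0 < z < 1 -> 3 * (0 - z) ^ 2 <= Dform 0 z * L 0 z.
Proof.
  intros Hz.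
  set (g := fun t => - ln (1 - t) - 3 * t / (2 * (2 - t))).
  set (dg := fun t => (1 - t + t ^ 2) / ((1 - t) * (2 - t) ^ 2)).
  assert (Hg : g 0 <= g z).
  { apply (mono_incr g dg). lra.
    - intros t Ht. unfold g, dg. auto_derive. lra. field. lra.
    - intros t Ht. unfold dg. apply Rdiv_le_0_compat. nra. apply Rmult_lt_0_compat; nra. }
  unfold g in Hg. replace (1 - 0) with 1 in Hg by ring. rewrite ln_1 in Hg.
  unfold Dform, L. rewrite Cst0.
  assert (E : 3 * z / (2 * (2 - z)) * (2 * (2 * z - z ^ 2 + 0 - 2 * 0 * z)) = 3 * (0 - z) ^ 2) by (field; lra).
  assert (0 <= 2 * (2 * z - z ^ 2 + 0 - 2 * 0 * z)) by nra.
  assert (3 * z / (2 * (2 - z)) <= - ln (1 - z)) by (unfold Rdiv in *; lra).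
  nra.
Qed.

Lemma key1 z : 0 < z < 1 -> 3 * (1 - z) ^ 2 <= Dform 1 z * L 1 z.
Proof.
  intros Hz.
  set (g := fun t => - ln t - 3 * (1 - t) / (2 * (1 + t))).
  set (dg := fun t => - (1 - t + t ^ 2) / (t * (1 + t) ^ 2)).
  assert (Hg : g 1 <= g z).
  { apply (mono_decr g dg). lra.
    - intros t Ht. unfold g, dg. auto_derive. lra. field. lra.
    - intros t Ht. unfold dg.
      replace (- (1 - t + t ^ 2) / (t * (1 + t) ^ 2)) with (- ((1 - t + t ^ 2) / (t * (1 + t) ^ 2))) by (unfold Rdiv; ring).
      assert (0 <= (1 - t + t ^ 2) / (t * (1 + t) ^ 2)). { apply Rdiv_le_0_compat. nra. apply Rmult_lt_0_compat; nra. }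
      lra. }
  unfold g in Hg. rewrite ln_1 in Hg.
  unfold Dform, L. rewrite Cst1.
  assert (E : 3 * (1 - z) / (2 * (1 + z)) * (2 * (2 * z - z ^ 2 + 1 - 2 * 1 * z)) = 3 * (1 - z) ^ 2) by (field; lra).
  assert (0 <= 2 * (2 * z - z ^ 2 + 1 - 2 * 1 * z)) by nra.
  assert (3 * (1 - z) / (2 * (1 + z)) <= - ln z) by (unfold Rdiv in *; lra).
  nra.
Qed.

Lemma key p z : 0 <= p <= 1 -> 0 < z < 1 -> 3 * (p - z) ^ 2 <= Dform p z * L p z.
Proof.
  intros Hp Hz. destruct (Req_dec p 0) as [->|H0]. now apply key0.
  destruct (Req_dec p 1) as [->|H1]. now apply key1. apply key_int; lra.
Qed.

Definition qf (a b t : R) := (Dform b t * (t - a) ^ 2) / (Dform a t * (b - t) ^ 2).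
Definition dq (a b t : R) :=
   ((((t - b) / (t * (1 - t)) * (t - a) ^ 2 + Dform b t * (2 * (t - a))) * (Dform a t * (b - t) ^ 2)
     - (Dform b t * (t - a) ^ 2) * ((t - a) / (t * (1 - t)) * (b - t) ^ 2 - Dform a t * (2 * (b - t))))
    / (Dform a t * (b - t) ^ 2) ^ 2).

Lemma qf_deriv (a b t : R) : 0 <= a -> a < t -> t < b -> b <= 1 -> Dform a t <> 0 ->
  is_derive (qf a b) t (dq a b t).
Proof.
  intros. unfold qf, dq, Dform in *. auto_derive.
  - repeat split; try lra. apply Rmult_integral_contrapositive. split.
    replace (1 + - t) with (1 - t) by ring. intro; apply H3; lra.
    apply Rmult_integral_contrapositive. split; [lra|]. apply Rmult_integral_contrapositive. split; lra.
  - replace (1 + - t) with (1 - t) by ring. field. repeat split; try lra.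
Qed.

Lemma dq_nonneg (a b t : R) : 0 <= a -> a < t -> t < b -> b <= 1 -> 0 <= dq a b t.
Proof.
  intros Ha Hat Htb Hb.
  assert (Ht : 0 < t < 1) by lra.
  assert (Ka := key a t ltac:(lra) Ht). assert (Kb := key b t ltac:(lra) Ht).
  assert (La := L_pos a t ltac:(lra) Ht). assert (Lb := L_pos b t ltac:(lra) Ht).
  set (Da := Dform a t) in *. set (Db := Dform b t) in *.
  assert (Dap : 0 < Da). { assert (0 < 3 * (a - t) ^ 2) by nra. nra. }
  assert (Dbp : 0 < Db). { assert (0 < 3 * (b - t) ^ 2) by nra. nra. }
  set (u := b - t). set (v := t - a). set (h := t * (1 - t)).
  assert (hp : 0 < h) by (unfold h; nra).
  assert (up : 0 < u) by (unfold u; lra). assert (vp : 0 < v) by (unfold v; lra).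
  assert (E : dq a b t = (v * u / h) * (2 * h * Da * Db * (u + v) - u * v * (Da * u + Db * v))
                          / (Da * u ^ 2) ^ 2).
  { unfold dq, u, v, h. fold Da Db. field. repeat split; lra. }
  rewrite E.
  assert (EL : v * L b t + u * L a t = 6 * h * (u + v)) by (unfold L, u, v, h; ring).
  assert (K1 : 3 * (u * v * (Da * u)) <= Da * v * Db * L b t).
  { replace (3 * (u * v * (Da * u))) with (Da * v * (3 * (b - t) ^ 2)) by (unfold u; ring).
    replace (Da * v * Db * L b t) with (Da * v * (Db * L b t)) by ring.
    apply Rmult_le_compat_l. nra. lra. }
  assert (K2 : 3 * (u * v * (Db * v)) <= Db * u * Da * L a t).
  { replace (3 * (u * v * (Db * v))) with (Db * u * (3 * (a - t) ^ 2)) by (unfold v; ring).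
    replace (Db * u * Da * L a t) with (Db * u * (Da * L a t)) by ring.
    apply Rmult_le_compat_l. nra. lra. }
  assert (B : 0 <= 2 * h * Da * Db * (u + v) - u * v * (Da * u + Db * v)).
  { assert (Da * v * Db * L b t + Db * u * Da * L a t = Da * Db * (v * L b t + u * L a t)) by ring.
    rewrite EL in H. nra. }
  apply Rdiv_le_0_compat. apply Rmult_le_pos; [|exact B].
  apply Rdiv_le_0_compat; [apply Rmult_le_pos; lra|exact hp].
  apply pow_lt. apply Rmult_lt_0_compat; [exact Dap|]. apply pow_lt. exact up.
Qed.

Theorem lemma16 (z1 z2 : R) :
  0 <= z1 -> z1 < z2 -> z2 <= 1 ->
  forall x y : R, z1 < x -> x <= y -> y < z2 ->
    qratio z1 z2 x <= qratio z1 z2 y.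
Proof.
  intros H1 H2 H3 x y Hx Hxy Hy.
  assert (Eq : forall t, z1 < t < z2 -> qratio z1 z2 t = qf z1 z2 t).
  { intros t Ht. unfold qratio, qf. rewrite !Dform_eq by lra. reflexivity. }
  rewrite !Eq by lra.
  apply (mono_incr (qf z1 z2) (dq z1 z2)). exact Hxy.
  - intros t Ht. apply qf_deriv; try lra.
    assert (Ka := key z1 t ltac:(lra) ltac:(lra)). assert (La := L_pos z1 t ltac:(lra) ltac:(lra)).
    assert (0 < 3 * (z1 - t) ^ 2) by nra. nra.
  - intros t Ht. apply dq_nonneg; lra.
Qed.
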